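(* Let $k$ be an algebraically closed field of characteristic $0$, $d\ge3$, and let $(V,\Theta)$ be a regular indecomposable $d$-linear space over $k$ with maximal center. Let $\mathbf{G}$ be the group of $k$-algebra automorphisms of $\mathrm{Cent}_k(\Theta)$ and $\chi:\mathcal{O}(\Theta)\to\mathbf{G}$, $\chi(\sigma)(f)=\sigma f\sigma^{-1}$. Let $\mu_d=\{\zeta\in k:\zeta^d=1\}$, identified with $\{\zeta\,\mathrm{id}_V\}\subseteq\mathcal{O}(\Theta)$. Then the sequence $1\to\mu_d\to\mathcal{O}(\Theta)\xrightarrow{\chi}\mathbf{G}$ is exact, i.e. $\ker\chi=\mu_d$.
   Context: A $d$-linear space is $(V,\Theta)$ with $V$ finite-dimensional over $k$ and $\Theta:V^d\to k$ symmetric $d$-linear. It is regular if $\Theta(w,u_2,\dots,u_d)=0$ for all $u_i$ implies $w=0$. Orthogonal sum: $(V_1\oplus V_2,\Theta_1\perp\Theta_2)$ with $(\Theta_1\perp\Theta_2)(v_1+u_1,\dots,v_d+u_d)=\Theta_1(v_1,\dots,v_d)+\Theta_2(u_1,\dots,u_d)$; the space is indecomposable if not isomorphic to an orthogonal sum of two (nonzero) $d$-linear spaces. Center: $\mathrm{Cent}_k(\Theta)=\{f\in\mathrm{End}_k(V):\Theta(f u_1,u_2,\dots,u_d)=\Theta(u_1,fu_2,\dots,u_d)\ \forall u_i\}$; the space has maximal center if $\mathrm{Cent}_k(\Theta)$ is a maximal commutative subalgebra of $\mathrm{End}_k(V)$. $\mathcal{O}(\Theta)=\{\sigma\in GL_k(V):\Theta(\sigma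 u_1,\dots,\sigma u_d)=\Theta(u_1,\dots,u_d)\ \forall u_i\}$. *)

(* Defs.v *)
(* V = 'rV[k]_n (row vectors); an endomorphism f of V is a
   matrix F acting by v |-> v *m F.  A d-tuple of vectors is a finfun. *)
From HB Require Import structures.
From mathcomp Require Import all_boot all_order all_algebra all_fingroup.
Set Implicit Arguments. Unset Strict Implicit. Unset Printing Implicit Defensive.
Import GRing.Theory.
Local Open Scope ring_scope.

Section DLinear.
Variable k : fieldType.

Definition upd d n (u : {ffun 'I_d -> 'rV[k]_n}) (i : 'I_d) (v : 'rV[k]_n) :
  {ffun 'I_d -> 'rV[k]_n} := [ffun j => if j == i then v else u j].

Definition multilinear d n (Th : {ffun 'I_d -> 'rV[k]_n} -> k) : Prop :=
  forall u i (a : k) v w,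
    Th (upd u i (a *: v + w)) = a * Th (upd u i v) + Th (upd u i w).

Definition symmetric_form d n (Th : {ffun 'I_d -> 'rV[k]_n} -> k) : Prop :=
  forall (s : 'S_d) (u : {ffun 'I_d -> 'rV[k]_n}), Th [ffun j => u (s j)] = Th u.

Definition dlinear d n (Th : {ffun 'I_d -> 'rV[k]_n} -> k) : Prop :=
  multilinear Th /\ symmetric_form Th.

Definition regular d n (Th : {ffun 'I_d -> 'rV[k]_n} -> k) : Prop :=
  forall w : 'rV[k]_n,
    (forall u (i : 'I_d), val i = 0%N -> Th (upd u i w) = 0) -> w = 0.

Definition orth_sum d n1 n2 (Th1 : {ffun 'I_d -> 'rV[k]_n1} -> k)
  (Th2 : {ffun 'I_d -> 'rV[k]_n2} -> k) (x : {ffun 'I_d -> 'rV[k]_(n1 + n2)}) : k :=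
  Th1 [ffun i => lsubmx (x i)] + Th2 [ffun i => rsubmx (x i)].

Definition dlin_iso d n m (Th : {ffun 'I_d -> 'rV[k]_n} -> k)
  (Th' : {ffun 'I_d -> 'rV[k]_m} -> k) (P : 'M[k]_(n, m)) : Prop :=
  [/\ row_free P, row_full P &
      forall u : {ffun 'I_d -> 'rV[k]_n}, Th' [ffun i => u i *m P] = Th u].

Definition indecomposable d n (Th : {ffun 'I_d -> 'rV[k]_n} -> k) : Prop :=
  ~ exists n1 n2 (Th1 : {ffun 'I_d -> 'rV[k]_n1} -> k)
          (Th2 : {ffun 'I_d -> 'rV[k]_n2} -> k) (P : 'M[k]_(n, n1 + n2)),
      [/\ (0 < n1)%N, (0 < n2)%N, dlinear Th1, dlinear Th2 &
          dlin_iso Th (orth_sum Th1 Th2) P].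

Definition Cent d n (Th : {ffun 'I_d -> 'rV[k]_n} -> k) (F : 'M[k]_n) : Prop :=
  forall u (i j : 'I_d), val i = 0%N -> val j = 1%N ->
    Th (upd u i (u i *m F)) = Th (upd u j (u j *m F)).

Definition subalgebra n (A : 'M[k]_n -> Prop) : Prop :=
  [/\ A 1%:M, (forall F G, A F -> A G -> A (F + G)),
      (forall (a : k) F, A F -> A (a *: F)) &
      (forall F G, A F -> A G -> A (F *m G))].

Definition commutative_set n (A : 'M[k]_n -> Prop) : Prop :=
  forall F G, A F -> A G -> F *m G = G *m F.

Definition maximal_commutative_subalgebra n (A : 'M[k]_n -> Prop) : Prop :=
  [/\ subalgebra A, commutative_set A &
      forall B : 'M[k]_n -> Prop, subalgebra B -> commutative_set B ->
        (forall F, A F -> B F) -> forall F, B F -> A F].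

Definition maximal_center d n (Th : {ffun 'I_d -> 'rV[k]_n} -> k) : Prop :=
  maximal_commutative_subalgebra (Cent Th).

Definition orthO d n (Th : {ffun 'I_d -> 'rV[k]_n} -> k) (S : 'M[k]_n) : Prop :=
  S \in unitmx /\ forall u : {ffun 'I_d -> 'rV[k]_n}, Th [ffun i => u i *m S] = Th u.

(* chi(sigma)(f) = sigma o f o sigma^{-1}; with the row-vector convention
   v |-> v *m F, the composite sigma o f o sigma^{-1} has matrix
   invmx S *m F *m S. *)
Definition chi n (S : 'M[k]_n) (F : 'M[k]_n) : 'M[k]_n := invmx S *m F *m S.

End DLinear.

(* Main.v *)
Require Import Defs.
From HB Require Import structures.
From mathcomp Require Import all_boot all_order all_algebra all_fingroup.
Set Implicit Arguments. Unset Strict Implicit. Unset Printing Implicit Defensive.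
Import GRing.Theory.
Local Open Scope ring_scope.

Section Aux.
Variable k : fieldType.

Lemma upd_perm d n (s : 'S_d) (u : {ffun 'I_d -> 'rV[k]_n}) x l :
  [ffun m => upd u (s l) x (s m)] = upd [ffun m => u (s m)] l x.
Proof.
apply/ffunP=> m; rewrite /upd !ffunE (inj_eq (@perm_inj _ s)).
by case: (m == l).
Qed.

Lemma upd_id d n (u : {ffun 'I_d -> 'rV[k]_n}) i : upd u i (u i) = u.
Proof. by apply/ffunP=> m; rewrite /upd ffunE; case: eqP => // ->. Qed.

Lemma upd_upd d n (u : {ffun 'I_d -> 'rV[k]_n}) i x y :
  upd (upd u i x) i y = upd u i y.
Proof. by apply/ffunP=> m; rewrite /upd !ffunE; case: eqP. Qed.

Lemma upd_eq d n (u : {ffun 'I_d -> 'rV[k]_n}) i x : upd u i x i = x.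
Proof. by rewrite /upd ffunE eqxx. Qed.

Lemma swap_gen d n (Th : {ffun 'I_d -> 'rV[k]_n} -> k) (F : 'M[k]_n) :
  Defs.symmetric_form Th -> Cent Th F ->
  forall (i0 i1 : 'I_d), val i0 = 0%N -> val i1 = 1%N ->
  forall (i j : 'I_d), i != j -> forall u,
  Th (upd u i (u i *m F)) = Th (upd u j (u j *m F)).
Proof.
move=> sym HC i0 i1 h0 h1 i j hij u.
have n01 : i0 != i1 by apply/eqP=> e; move: h0 h1; rewrite e => ->.
set a := tperm i0 i i1.
have hai : i != a.
  by rewrite /a -{1}(tpermL i0 i) (inj_eq (@perm_inj _ _)).
set s : 'S_d := (tperm i0 i * tperm a j)%g.
have s0 : s i0 = i by rewrite /s permM tpermL tpermD // eq_sym.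
have s1 : s i1 = j by rewrite /s permM -/a tpermL.
set v := [ffun m => u (s m)].
have e0 : Th (upd u i (u i *m F)) = Th (upd v i0 (v i0 *m F)).
  have -> : upd v i0 (v i0 *m F) = [ffun m => upd u i (u i *m F) (s m)].
    by rewrite /v ffunE -s0 upd_perm.
  by rewrite sym.
have e1 : Th (upd u j (u j *m F)) = Th (upd v i1 (v i1 *m F)).
  have -> : upd v i1 (v i1 *m F) = [ffun m => upd u j (u j *m F) (s m)].
    by rewrite /v ffunE -s1 upd_perm.
  by rewrite sym.
by rewrite e0 e1; apply: HC.
Qed.

Lemma pow_move d n (Th : {ffun 'I_d -> 'rV[k]_n.+1} -> k) (F : 'M[k]_n.+1) :
  Defs.symmetric_form Th -> Cent Th F ->
  forall (i0 i1 : 'I_d), val i0 = 0%N -> val i1 = 1%N -> forall u : {ffun 'I_d -> 'rV[k]_n.+1},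
  Th [ffun i => u i *m F] = Th (upd u i0 (u i0 *m F ^+ d)).
Proof.
move=> sym HC i0 i1 h0 h1.
have claim : forall m, (m < d)%N -> forall u : {ffun 'I_d -> 'rV[k]_n.+1},
    Th [ffun i : 'I_d => if (val i <= m)%N then u i *m F else u i]
    = Th (upd u i0 (u i0 *m F ^+ m.+1)).
  elim=> [|m IH] hm u.
    congr Th; apply/ffunP=> i; rewrite /upd !ffunE expr1 leqn0.
    have -> : (val i == 0%N) = (i == i0) by rewrite -h0 val_eqE.
    by case: eqP => // ->.
  set j : 'I_d := Ordinal hm.
  have hj : j != i0 by apply/eqP=> e; move: h0; rewrite -e.
  set w := [ffun i : 'I_d => if (val i <= m)%N then u i *m F else u i].
  have -> : [ffun i : 'I_d => if (val i <= m.+1)%N then u i *m F else u i]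
      = upd w j (w j *m F).
    apply/ffunP=> i; rewrite /upd /w !ffunE /= ltnn.
    case: (eqVneq i j) => [->|nij] /=; first by rewrite leqnn.
    rewrite leq_eqVlt ltnS; have -> : (val i == m.+1) = false.
      by apply/negbTE; apply: contra nij => /eqP e; apply/eqP/val_inj.
    by [].
  rewrite (swap_gen sym HC h0 h1 hj).
  have -> : upd w i0 (w i0 *m F) =
      [ffun i : 'I_d => if (val i <= m)%N
         then (upd u i0 (u i0 *m F)) i *m F else (upd u i0 (u i0 *m F)) i].
    apply/ffunP=> i; rewrite /upd /w !ffunE h0 /=.
    by case: eqP => [->|]; rewrite ?h0.
  rewrite IH; last exact: ltnW.
  by rewrite upd_upd upd_eq -mulmxA mulmxE -exprS.
have dp : (0 < d)%N by apply: leq_ltn_trans (ltn_ord i0); rewrite h0.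
move=> u; have hd : (d.-1 < d)%N by rewrite -ltnS prednK.
have := claim d.-1 hd u; rewrite prednK // => <-.
congr Th; apply/ffunP=> i; rewrite !ffunE -ltnS prednK // ltn_ord.
by [].
Qed.


Lemma comm_subalg n (T : 'M[k]_n -> Prop) :
  subalgebra (fun G => forall H, T H -> G *m H = H *m G).
Proof.
split.
- by move=> H _; rewrite mul1mx mulmx1.
- by move=> F G hF hG H tH; rewrite mulmxDl mulmxDr hF // hG.
- by move=> a F hF H tH; rewrite -scalemxAl -scalemxAr hF.
- by move=> F G hF hG H tH; rewrite -mulmxA hG // mulmxA hF // mulmxA.
Qed.

Lemma commutant_in n (A : 'M[k]_n -> Prop) (F : 'M[k]_n) :
  maximal_commutative_subalgebra A ->
  (forall G, A G -> G *m F = F *m G) -> A F.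
Proof.
case=> sA cA mA hF.
pose B G := forall P, subalgebra P -> (forall X, A X -> P X) -> P F -> P G.
have sB : subalgebra B.
  split.
  - by move=> P [] *.
  - move=> X Y hX hY P sP hAP hPF; have [_ h _ _] := sP.
    by apply: h; [apply: hX | apply: hY].
  - move=> a X hX P sP hAP hPF; have [_ _ h _] := sP.
    by apply: h; apply: hX.
  - move=> X Y hX hY P sP hAP hPF; have [_ _ _ h] := sP.
    by apply: h; [apply: hX | apply: hY].
have AB : forall X, A X -> B X by move=> X hX P _ hAP _; apply: hAP.
have BF : B F by move=> P _ _ h.
pose P1 G := forall H, (A H \/ H = F) -> G *m H = H *m G.
have BP1 : forall G, B G -> P1 G.
  move=> G hG; apply: hG; first exact: comm_subalg.
    by move=> X hX H [hH|->]; [apply: cA | apply: hF].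
  by move=> H [hH|->]; [rewrite hF|].
have cB : commutative_set B.
  move=> X Y hX hY.
  have : (fun G => forall H, B H -> G *m H = H *m G) X.
    apply: (hX (fun G => forall H, B H -> G *m H = H *m G)); first exact: comm_subalg.
      by move=> Z hZ H hH; rewrite (BP1 H hH Z (or_introl hZ)).
    by move=> H hH; rewrite (BP1 H hH F (or_intror erefl)).
  by move=> /(_ Y hY).
exact: (mA B sB cB AB F BF).
Qed.


Lemma dlinear_pull d n m (Th : {ffun 'I_d -> 'rV[k]_n} -> k) (M : 'M[k]_(m, n)) :
  dlinear Th -> dlinear (fun x : {ffun 'I_d -> 'rV[k]_m} => Th [ffun i => x i *m M]).
Proof.
case=> ml sy; split.
  move=> u i a v w.
  have e : forall y, [ffun j => upd u i y j *m M]
      = upd [ffun j => u j *m M] i (y *m M).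
    by move=> y; apply/ffunP=> j; rewrite /upd !ffunE; case: eqP.
  by rewrite !e mulmxDl -scalemxAl ml.
move=> s u.
have -> : [ffun i => [ffun j => u (s j)] i *m M] = [ffun j => [ffun i => u i *m M] (s j)].
  by apply/ffunP=> j; rewrite !ffunE.
by rewrite sy.
Qed.


Lemma idem_pow n (E : 'M[k]_n.+1) : E *m E = E -> forall m, E ^+ m.+1 = E.
Proof. by move=> hE; elim=> [|m IH]; rewrite ?expr1 // exprS IH -mulmxE. Qed.

Lemma sub_idem m n (X : 'M[k]_(m, n)) (E : 'M[k]_n) :
  E *m E = E -> (X <= E)%MS -> X *m E = X.
Proof. by move=> hE /submxP [D ->]; rewrite -mulmxA hE. Qed.

Lemma decomp d n (Th : {ffun 'I_d -> 'rV[k]_n.+1} -> k) (E : 'M[k]_n.+1) :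
  dlinear Th -> Cent Th E -> Cent Th (1%:M - E) -> E *m E = E ->
  E != 0 -> E != 1%:M -> (2 < d)%N -> ~ indecomposable Th.
Proof.
move=> dl hE hE' idE nz n1 d3; apply.
have [ml sym] := dl.
have i0l : (0 < d)%N by apply: leq_trans d3.
have i1l : (1 < d)%N by apply: leq_trans d3.
set i0 : 'I_d := Ordinal i0l; set i1 : 'I_d := Ordinal i1l.
set E' := 1%:M - E.
have idE' : E' *m E' = E'.
  by rewrite /E' mulmxBl mul1mx mulmxBr mulmx1 idE subrr subr0.
set B1 := row_base E; set B2 := row_base E'.
have B1E : B1 *m E = B1 by apply: sub_idem; rewrite // /B1 eq_row_base.
have B2E' : B2 *m E' = B2 by apply: sub_idem; rewrite // /B2 eq_row_base.
have B2E : B2 *m E = 0.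
  by rewrite -B2E' -mulmxA /E' mulmxBl mul1mx idE subrr mulmx0.
have B1E' : B1 *m E' = 0 by rewrite /E' mulmxBr mulmx1 B1E subrr.
have EB1 : E *m pinvmx B1 *m B1 = E by apply: mulmxKpV; rewrite /B1 eq_row_base.
have EB2 : E' *m pinvmx B2 *m B2 = E' by apply: mulmxKpV; rewrite /B2 eq_row_base.
exists (\rank E), (\rank E'),
  (fun x => Th [ffun i => x i *m B1]), (fun x => Th [ffun i => x i *m B2]),
  (row_mx (E *m pinvmx B1) (E' *m pinvmx B2)).
split.
- by rewrite lt0n mxrank_eq0.
- by rewrite lt0n mxrank_eq0 /E' subr_eq0 eq_sym.
- exact: dlinear_pull.
- exact: dlinear_pull.
split.
- apply/row_freeP; exists (col_mx B1 B2).
  by rewrite mul_row_col EB1 EB2 /E' addrC subrK.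
- apply/row_fullP; exists (col_mx B1 B2).
  rewrite mul_col_row !(mulmxA B1) !(mulmxA B2) B1E B1E' B2E B2E' !mul0mx !mulmxVp ?row_base_free //.
  idtac.
  by rewrite -scalar_mx_block.
move=> u; rewrite /orth_sum.
rewrite (_ : [ffun i => _ *m B1] = [ffun i => u i *m E]); last first.
  by apply/ffunP=> i; rewrite !ffunE mul_mx_row row_mxKl -mulmxA EB1.
rewrite (_ : [ffun i => _ *m B2] = [ffun i => u i *m E']); last first.
  by apply/ffunP=> i; rewrite !ffunE mul_mx_row row_mxKr -mulmxA EB2.
rewrite (pow_move sym hE (i0:=i0) (i1:=i1)) // (pow_move sym hE' (i0:=i0) (i1:=i1)) //.
have Ed : E ^+ d = E by move: (i0l); case: (d) => // m _; rewrite idem_pow.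
have Ed' : (1%:M - E) ^+ d = 1%:M - E.
  by move: (i0l); case: (d) => // m _; rewrite idem_pow.
rewrite Ed Ed'.
rewrite -[X in X + _]mul1r -ml scale1r -mulmxDr /E' addrC subrK mulmx1 upd_id.
by [].
Qed.


Lemma scalar_pow n (a : k) m : (a%:M : 'M[k]_n.+1) ^+ m = (a ^+ m)%:M.
Proof.
elim: m => [|m IH]; first by rewrite !expr0.
by rewrite !exprS IH -mulmxE -scalar_mxM.
Qed.

Lemma eig_horner n (S : 'M[k]_n.+1) (v : 'rV[k]_n.+1) (l : k) :
  v *m S = l *: v -> forall p, v *m horner_mx S p = p.[l] *: v.
Proof.
move=> hv; elim/poly_ind=> [|p c IH].
  by rewrite rmorph0 mulmx0 horner0 scale0r.
rewrite rmorphD rmorphM /= horner_mx_X horner_mx_C hornerMXaddC.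
rewrite mulmxDr -mulmxE mulmxA IH -scalemxAl hv scalerA mul_mx_scalar.
by rewrite scalerDl.
Qed.

End Aux.

Unset Implicit Arguments.

Theorem theorem4p2 (k : closedFieldType) (d n : nat)
  (Th : {ffun 'I_d -> 'rV[k]_n} -> k) :
  [pchar k] =i pred0 -> (3 <= d)%N ->
  dlinear Th -> regular Th -> indecomposable Th -> maximal_center Th ->
  forall S : 'M[k]_n,
    (orthO Th S /\ (forall F, Cent Th F -> chi S F = F)) <->
    (exists zeta : k, zeta ^+ d = 1 /\ S = zeta%:M).
Proof.
move=> ch0 d3 dl reg indec mc S.
have [ml sym] := dl.
have mc' := mc; case: mc' => [[C1 Cadd Cscale Cmul] Ccomm Cmax].
have i0l : (0 < d)%N by apply: leq_trans d3.
have i1l : (1 < d)%N by apply: leq_trans d3.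
set i0 : 'I_d := Ordinal i0l; set i1 : 'I_d := Ordinal i1l.
have h0 : val i0 = 0%N by []. have h1 : val i1 = 1%N by [].
case: n Th S dl reg indec mc ml sym C1 Cadd Cscale Cmul Ccomm Cmax
  => [|n] Th S dl reg indec mc ml sym C1 Cadd Cscale Cmul Ccomm Cmax.
  split=> _.
    by exists 1; split; [rewrite expr1n | apply/matrixP=> i; case: i].
  split; last by move=> F _; apply/matrixP=> i; case: i.
  split; first by rewrite unitmxE det_mx00 unitr1.
  by move=> u; congr Th; apply/ffunP=> i; rewrite ffunE; apply/rowP=> j; case: j.
split; last first.
  move=> [z [hz ->]].
  have z0 : z != 0.
    by apply/eqP=> e; move: hz; rewrite e expr0n; move: (i0l); case: (d) => [//|m] _ /= /eqP; rewrite eq_sym oner_eq0.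
  have Cz : Cent Th z%:M by rewrite -scalemx1; apply: Cscale.
  split.
    split; first by rewrite unitmxE det_scalar unitfE expf_neq0.
    move=> u; rewrite (pow_move sym Cz (i0:=i0) (i1:=i1)) //.
    by rewrite scalar_pow hz mulmx1 upd_id.
  move=> F _; rewrite /chi invmx_scalar mul_scalar_mx mul_mx_scalar scalerA.
  by rewrite divff // scale1r.
move=> [[Su Sth] Schi].
have SC : Cent Th S.
  apply: (commutant_in mc) => G hG.
  have := Schi G hG; rewrite /chi => e.
  by rewrite -{2}e !mulmxA mulmxV // mul1mx.
have Sd : S ^+ d = 1%:M.
  have hw : forall w : 'rV[k]_n.+1, w *m (S ^+ d - 1%:M) = 0.
    move=> w; apply: reg => u i hi.
    have -> : i = i0 by apply: val_inj.
    set u' := upd u i0 w.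
    have -> : upd u i0 (w *m (S ^+ d - 1%:M))
        = upd u' i0 ((-1) *: (u' i0) + u' i0 *m S ^+ d).
      by rewrite upd_upd /u' upd_eq mulmxBr mulmx1 scaleN1r addrC.
    rewrite ml -(pow_move sym SC (i0:=i0) (i1:=i1)) // Sth upd_id.
    by rewrite mulN1r addNr.
  apply/eqP; rewrite -subr_eq0; apply/eqP/row_matrixP=> r.
  by rewrite row0 -(mul1mx (_ - _)) row_mul hw.
have [l rl] : exists l, root (char_poly S) l.
  by apply/closed_rootP; rewrite size_char_poly.
rewrite -eigenvalue_root_char in rl; have [v hv vnz] := eigenvalueP rl.
have ld : l ^+ d = 1.
  have := eig_horner hv ('X^d); rewrite rmorphXn /= horner_mx_X Sd mulmx1 hornerXn.
  move/eqP; rewrite -subr_eq0 -{1}(scale1r v) -scalerBl scaler_eq0 (negbTE vnz) orbF.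
  by rewrite subr_eq0 eq_sym => /eqP.
have l0 : l != 0.
  by apply/eqP=> e; move: ld; rewrite e expr0n; move: (i0l); case: (d) => [//|m] _ /= /eqP; rewrite eq_sym oner_eq0.
case: (eqVneq S l%:M) => [->|Snl]; first by exists l.
exfalso.
set q : {poly k} := 'X^d - 1.
have rq : root q l.
  rewrite /root /q !hornerE. by rewrite subr_eq0; apply/eqP.
have [r qr] := factor_theorem _ _ rq.
set c := r.[l].
have c0 : c != 0.
  have : (q^`()).[l] = c.
    rewrite qr derivM derivXsubC !hornerE subrr. by rewrite mulr0 add0r.
  rewrite /q derivB derivXn derivC subr0 hornerMn hornerXn => <-.
  rewrite -mulr_natr mulf_neq0 ?expf_neq0 //.
  by have := (pcharf0P k).1 ch0 d; move=> ->; rewrite -lt0n.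
have rcl : root (r - c%:P) l by rewrite /root !hornerE subrr.
have [t rt] := factor_theorem _ _ rcl.
have Hq : horner_mx S q = 0.
  by rewrite /q rmorphB rmorphXn /= horner_mx_X rmorph1 Sd subrr.
set R := horner_mx S r.
have RR : R *m R = c *: R.
  have : horner_mx S (r * (r - c%:P)) = 0.
    by rewrite rt mulrCA -qr rmorphM /= Hq mulr0.
  rewrite rmorphM rmorphB /= horner_mx_C -/R -mulmxE mulmxBr mul_mx_scalar.
  by move/eqP; rewrite subr_eq0 => /eqP.
set E := c^-1 *: R.
have idE : E *m E = E.
  rewrite /E -scalemxAl -scalemxAr RR !scalerA. by rewrite divfK.
have CE : Cent Th E.
  apply: (commutant_in mc) => G hG.
  have cGS : comm_mx G S by rewrite /comm_mx (Ccomm G S hG SC).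
  have := comm_mx_horner r cGS; rewrite /comm_mx -/R => e.
  by rewrite /E -scalemxAl -scalemxAr e.
have CE' : Cent Th (1%:M - E).
  by rewrite -scaleN1r; apply: Cadd => //; apply: Cscale.
have Enz : E != 0.
  apply/eqP=> e.
  have := eig_horner hv r; rewrite -/R -/c.
  have -> : R = c *: E by rewrite /E scalerA divff // scale1r.
  by rewrite e scaler0 mulmx0 => /esym/eqP; rewrite scaler_eq0 (negbTE c0) (negbTE vnz).
have En1 : E != 1%:M.
  apply/eqP=> e.
  have eR : R = c%:M by rewrite -scalemx1 -e /E scalerA divff // scale1r.
  move: Hq; rewrite qr rmorphM rmorphB /= horner_mx_X horner_mx_C -/R eR -mulmxE.
  rewrite mul_scalar_mx => /eqP; rewrite scaler_eq0 (negbTE c0) /= subr_eq0.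
  by rewrite (negbTE Snl).
exact: (decomp dl CE CE' idE Enz En1 d3 indec).
Qed.
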